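(* Let $H$ be a graph with degree sequence $\pi(H)=(h_1,\ldots,h_k)$ and let $\pi=(d_1,\ldots,d_n)$ be a graphic sequence with $d_1\le M$ (i.e., every term is at most $M$) such that there are terms $d_{i_1},\ldots,d_{i_k}$ of $\pi$ (with distinct indices $i_1,\ldots,i_k$) satisfying $d_{i_j}\ge h_j$ for $1\le j\le k$. If $\pi$ has at least $2M^2+k$ positive terms, then there is a realization $G$ of $\pi$ containing a copy of $H$ whose vertices are the vertices of $G$ corresponding to the terms $d_{i_1},\ldots,d_{i_k}$.
   Context: A sequence of nonnegative integers is graphic if it is the degree sequence of some (finite simple) graph, called a realization; graphic sequences are written in nonincreasing order. The degree sequence of $H$ is written in nonincreasing order. *)

(* Defs.v *)
From mathcomp Require Import all_boot.
Set Implicit Arguments. Unset Strict Implicit. Unset Printing Implicit Defensive.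

Definition simple_graph (T : finType) (e : rel T) : Prop :=
  irreflexive e /\ symmetric e.

Definition deg (T : finType) (e : rel T) (v : T) : nat := #|[pred u | e v u]|.

Definition nonincreasing (n : nat) (d : 'I_n -> nat) : Prop :=
  forall i j : 'I_n, i <= j -> d j <= d i.

Definition realization (n : nat) (e : rel 'I_n) (d : 'I_n -> nat) : Prop :=
  simple_graph e /\ forall i, deg e i = d i.

Definition graphic (n : nat) (d : 'I_n -> nat) : Prop :=
  exists e : rel 'I_n, realization e d.

(* Main.v *)
Require Import Defs.
From mathcomp Require Import all_boot.
From mathcomp Require Import zify.
Set Implicit Arguments. Unset Strict Implicit. Unset Printing Implicit Defensive.

Lemma card_bigcup_le (T I : finType) (P : pred I) (F : I -> {set T}) :
  #|\bigcup_(i | P i) F i| <= \sum_(i | P i) #|F i|.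
Proof.
elim/big_rec2: _ => [|i m U _ h]; first by rewrite cards0.
by rewrite (leq_trans (leq_card_setU _ _).1) ?leq_add2l.
Qed.

Lemma card_pred_sum (T : finType) (P : pred T) :
  #|[pred x | P x]| = \sum_x (P x : nat).
Proof. rewrite -sum1_card big_mkcond /=; apply: eq_bigr => x _; by rewrite inE; case: (P x). Qed.

Lemma sum_mem_pairs n (L : seq ('I_n * 'I_n)) t : uniq L ->
  \sum_s (((t, s) \in L) : nat) = count (fun p => p.1 == t) L.
Proof.
elim: L => [|p L IH] /=; first by rewrite big1.
move=> /andP [pL uL]; rewrite -IH //.
have -> : \sum_s (((t,s) \in p :: L) : nat) =
    \sum_s (((t,s) == p) : nat) + \sum_s (((t,s) \in L):nat).
  rewrite -big_split /=; apply: eq_bigr => s _; rewrite in_cons.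
  case: eqP => [-> |] //=; by rewrite (negbTE pL).
congr (_ + _).
case: p {pL} => a b /=.
rewrite (bigD1 b) //= big1 ?addn0.
  by rewrite xpair_eqE eqxx andbT eq_sym.
by move=> s /negbTE sb; rewrite xpair_eqE sb andbF.
Qed.

Definition switch n (e : rel 'I_n) (R A : seq ('I_n * 'I_n)) : rel 'I_n :=
  fun s t => (e s t && ((s,t) \notin R)) || ((s,t) \in A).

Lemma switch_real n (e : rel 'I_n) d R A :
  realization e d -> uniq R -> uniq A ->
  all (fun p => e p.1 p.2) R ->
  all (fun p => ~~ e p.1 p.2 && (p.1 != p.2)) A ->
  all (fun p => (p.2, p.1) \in R) R ->
  all (fun p => (p.2, p.1) \in A) A ->
  (forall t, count (fun p => p.1 == t) R = count (fun p => p.1 == t) A) ->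
  realization (switch e R A) d.
Proof.
move=> [[irr sym] degE] uR uA /allP RE /allP AE /allP Rs /allP As cnt.
have Rsym s t : ((s,t) \in R) = ((t,s) \in R).
  by apply/idP/idP => [/Rs|/Rs].
have Asym s t : ((s,t) \in A) = ((t,s) \in A).
  by apply/idP/idP => [/As|/As].
split; first split.
- move=> t; rewrite /switch irr /=; apply/negP => /AE /=.
  by rewrite eqxx andbF.
- by move=> s t; rewrite /switch sym Rsym Asym.
move=> t; rewrite -degE /deg !card_pred_sum.
apply: (@addnI (\sum_s (((t,s) \in R) : nat))).
rewrite [X in _ = X + _]sum_mem_pairs // cnt -sum_mem_pairs // -!big_split /=.
apply: eq_bigr => s _; rewrite /switch.
have hR := RE (t,s); have hA := AE (t,s).
move: hR hA. case: ((t,s) \in R); case: ((t,s) \in A) => /=.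
- by move=> /(_ isT) -> /(_ isT); rewrite andbF.
- by move=> /(_ isT) ->.
- by move=> _ /(_ isT) /andP [/negbTE ->].
- by case: (e t s).
Qed.

Lemma nbr_card n (e : rel 'I_n) t : #|[set s | e t s]| = deg e t.
Proof. by apply: eq_card => s; rewrite inE. Qed.

Lemma free_nbr k n (eH : rel 'I_k) (e : rel 'I_n) d (idx : 'I_k -> 'I_n) a b :
  realization e d -> deg eH a <= d (idx a) -> eH a b -> ~~ e (idx a) (idx b) ->
  exists x, e (idx a) x && (x \notin idx @: [pred c | eH a c]).
Proof.
move=> [_ degE] hd hab nab.
set S := idx @: [pred c | eH a c].
have [x Hx|none] := pickP [pred x | e (idx a) x && (x \notin S)]; first by exists x.
exfalso.
have sub : [set x | e (idx a) x] \subset S :\ idx b.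
  apply/subsetP => x; rewrite !inE => ex.
  have := none x; rewrite /= ex /= => /negbFE ->; rewrite andbT.
  by apply/eqP => xb; rewrite -xb ex in nab.
have := subset_leq_card sub; rewrite nbr_card degE.
have bS : idx b \in S by apply: imset_f; rewrite inE.
have := cardsD1 (idx b) S; rewrite bS /= => eS.
have h1 : #|S| <= deg eH a by exact: leq_imset_card.
have h0 : 0 < deg eH a by apply/card_gt0P; exists b.
move=> h; have := leq_trans hd h. move: h1 h0; rewrite eS. clear; clearbody S; lia.
Qed.

Lemma closed_nbr_card n (e : rel 'I_n) y : #|[set t | (t == y) || e y t]| <= (deg e y).+1.
Proof.
rewrite -nbr_card; apply: leq_trans (subset_leq_card (_ : _ \subset y |: [set t | e y t])) _.
  by apply/subsetP => t; rewrite !inE.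
by rewrite cardsU1; case: (y \notin _).
Qed.

Lemma edge_neq n (e : rel 'I_n) s t : irreflexive e -> e s t -> (s == t) = false.
Proof. by move=> irr est; apply/eqP => st; rewrite st irr in est. Qed.

Lemma step k n M (eH : rel 'I_k) (d : 'I_n -> nat) (idx : 'I_k -> 'I_n)
    (e : rel 'I_n) a b :
  simple_graph eH -> (forall i, d i <= M) -> injective idx ->
  (forall j, deg eH j <= d (idx j)) -> 2 * M ^ 2 + k <= #|[set i | 0 < d i]| ->
  realization e d -> eH a b -> ~~ e (idx a) (idx b) ->
  exists e', realization e' d /\ e' (idx a) (idx b) /\
    (forall a' b', eH a' b' -> e (idx a') (idx b') -> e' (idx a') (idx b')).
Proof.
move=> [irrH symH] dM inj hd pos real hab nab.
have real' := real; case: real' => [[irr sym] degE].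
have nba : ~~ e (idx b) (idx a) by rewrite sym.
have hba : eH b a by rewrite symH.
have [x /andP [ux xS]] := free_nbr real (hd a) hab nab.
have [y /andP [vy yS]] := free_nbr real (hd b) hba nba.
move: ux xS vy yS nab nba.
set u := idx a; set v := idx b => ux xS vy yS nab nba.
have xu : e x u by rewrite sym.
have yv : e y v by rewrite sym.
have Fuv : (u == v) = false.
  by rewrite /u /v inj_eq //; apply/eqP => ab; rewrite ab irrH in hab.
have Fvu : (v == u) = false by rewrite eq_sym.
have Fux := edge_neq irr ux. have Fxu : (x == u) = false by rewrite eq_sym.
have Fvy := edge_neq irr vy. have Fyv : (y == v) = false by rewrite eq_sym.
have Fuy : (u == y) = false by apply/eqP => uy; rewrite uy yv in nab.
have Fyu : (y == u) = false by rewrite eq_sym.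
have Fxv : (x == v) = false by apply/eqP => xv; rewrite -xv ux in nab.
have Fvx : (v == x) = false by rewrite eq_sym.
have pUX a' b' : eH a' b' -> ((idx a' == u) && (idx b' == x)) = false.
  move=> h; apply/negP => /andP [/eqP /inj ea /eqP eb].
  by case/negP: xS; rewrite -eb; apply: imset_f; rewrite inE -ea.
have pXU a' b' : eH a' b' -> ((idx a' == x) && (idx b' == u)) = false.
  move=> h; apply/negP => /andP [/eqP ea /eqP /inj eb].
  by case/negP: xS; rewrite -ea; apply: imset_f; rewrite inE symH -eb.
have pVY a' b' : eH a' b' -> ((idx a' == v) && (idx b' == y)) = false.
  move=> h; apply/negP => /andP [/eqP /inj ea /eqP eb].
  by case/negP: yS; rewrite -eb; apply: imset_f; rewrite inE -ea.
have pYV a' b' : eH a' b' -> ((idx a' == y) && (idx b' == v)) = false.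
  move=> h; apply/negP => /andP [/eqP ea /eqP /inj eb].
  by case/negP: yS; rewrite -ea; apply: imset_f; rewrite inE symH -eb.
case: (boolP ((x != y) && ~~ e x y)) => [/andP [nxy nexy] | hxy].
  have Fxy := negbTE nxy. have Fyx : (y == x) = false by rewrite eq_sym.
  have neyx : ~~ e y x by rewrite sym.
  exists (switch e [:: (u,x); (x,u); (v,y); (y,v)] [:: (u,v); (v,u); (x,y); (y,x)]).
  split; last split.
  - apply: switch_real => //.
    + by rewrite /= !inE !xpair_eqE ?Fux ?Fxu ?Fuv ?Fvu ?Fuy ?Fyu ?Fxv ?Fvx ?Fvy ?Fyv ?Fxy ?Fyx ?andbF.
    + by rewrite /= !inE !xpair_eqE ?Fux ?Fxu ?Fuv ?Fvu ?Fuy ?Fyu ?Fxv ?Fvx ?Fvy ?Fyv ?Fxy ?Fyx ?andbF.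
    + by rewrite /= ux xu vy yv.
    + by rewrite /= nab nba nexy neyx Fuv Fvu Fxy Fyx.
    + by rewrite /= !inE !eqxx ?orbT.
    + by rewrite /= !inE !eqxx ?orbT.
    + by move=> t /=; rewrite (addnCA (x == t)).
  - by rewrite /switch !inE eqxx orbT.
  move=> a' b' h eab; rewrite /switch eab !inE !xpair_eqE.
  by rewrite pUX // pXU // pVY // pYV.
have hyNx : (y == x) || e x y.
  by move: hxy; rewrite negb_and !negbK eq_sym.
have M1 : 0 < M.
  have : 0 < deg e u by apply/card_gt0P; exists x.
  by rewrite degE; move/leq_trans; apply.
pose I := idx @: [set: 'I_k].
pose Nx := [set t | (t == x) || e x t].
pose Ny := [set t | (t == y) || e y t].
pose P := [set i | 0 < d i].
pose Cand := P :\: (I :|: Nx).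
pose F t := [set s | e t s && (s \notin I) && (s != y)].
have uI : u \in I by apply: imset_f; rewrite in_setT.
have vI : v \in I by apply: imset_f; rewrite in_setT.
have idxI j : idx j \in I by apply: imset_f; rewrite in_setT.
have yNx : y \in Nx by rewrite inE.
have : [exists w, (w \in Cand) && [exists z, e w z && (z \notin Ny)]].
  case: (boolP [exists w, (w \in Cand) && [exists z, e w z && (z \notin Ny)]]) => // /existsPn none; exfalso.
  have sub : Cand \subset \bigcup_(t in Ny) F t.
    apply/subsetP => w wC.
    have := none w; rewrite wC /= => /existsPn nz.
    move: wC; rewrite in_setD in_setU negb_or inE => /andP [/andP [wI wNx] wP].
    rewrite /P inE -degE in wP; case/card_gt0P: wP => z; rewrite inE => ez.
    have := nz z; rewrite ez /= negbK => zNy.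
    apply/bigcupP; exists z => //; rewrite inE sym ez wI /=.
    by apply/eqP => wy; move: yNx; rewrite inE -wy (negbTE wNx).
  have c1 : #|Cand| <= \sum_(t in Ny) #|F t|.
    exact: leq_trans (subset_leq_card sub) (card_bigcup_le _ _).
  have c2 : \sum_(t in Ny) #|F t| <= \sum_(t in Ny) M.-1.
    apply: leq_sum => t tNy.
    pose s0 := if t == y then v else y.
    have es0 : e t s0.
      rewrite /s0; case: eqP => [-> //|ty].
      by move: tNy; rewrite inE; case: eqP => //= _; rewrite sym.
    have s0F : s0 \notin F t.
      by rewrite /s0 inE; case: eqP => _; rewrite ?vI ?eqxx /= ?andbF.
    have sF : F t \subset [set s | e t s] :\ s0.
      apply/subsetP => s sF; rewrite in_setD1; apply/andP; split.
        by apply/eqP => ss0; move: sF; rewrite ss0 (negbTE s0F).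
      by move: sF; rewrite !inE => /andP [/andP [-> _] _].
    have := subset_leq_card sF.
    have := cardsD1 s0 [set s | e t s]; rewrite inE es0 nbr_card degE /= => h.
    move=> h2; apply: leq_trans h2 _; move: (dM t); rewrite h; move: (#|_ :\ s0|) => m.
    by rewrite add1n => hM; rewrite -ltnS prednK.
  rewrite sum_nat_const in c2.
  have c3 : #|Ny| <= M.+1 by apply: leq_trans (closed_nbr_card e y) _; rewrite degE ltnS.
  have c4 : #|Nx| <= M.+1 by apply: leq_trans (closed_nbr_card e x) _; rewrite degE ltnS.
  have c5 : #|I| <= k by apply: leq_trans (leq_imset_card _ _) _; rewrite cardsT card_ord.
  have c6 : 0 < #|I :&: Nx| by apply/card_gt0P; exists u; rewrite in_setI uI inE xu orbT.
  have c7 := cardsU I Nx.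
  have c8 : #|P| <= #|Cand| + #|I :|: Nx|.
    rewrite /Cand cardsD; have := subset_leq_card (subsetIr P (I :|: Nx)); clear; lia.
  have c9 : #|Ny| * M.-1 <= M.+1 * M.-1 by rewrite leq_mul2r c3 orbT.
  move: pos; rewrite -/P -mulnn.
  clear -c1 c2 c5 c6 c7 c8 c9 c4 M1.
  nia.
case/existsP => w /andP [wC /existsP [z /andP [wz zNy]]].
move: wC; rewrite in_setD in_setU negb_or inE => /andP [/andP [wI wNx] _].
move: wNx; rewrite negb_or => /andP [/negbTE Fwx nexw].
move: zNy; rewrite inE negb_or => /andP [/negbTE Fzy neyz].
have Fxw : (x == w) = false by rewrite eq_sym.
have Fyz : (y == z) = false by rewrite eq_sym.
have newx : ~~ e w x by rewrite sym.
have nezy : ~~ e z y by rewrite sym.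
have Fwu : (w == u) = false by apply/eqP => wu; rewrite wu uI in wI.
have Fuw : (u == w) = false by rewrite eq_sym.
have Fwv : (w == v) = false by apply/eqP => wv; rewrite wv vI in wI.
have Fvw : (v == w) = false by rewrite eq_sym.
have Fwy : (w == y) = false.
  by apply/eqP => wy; move: yNx; rewrite inE -wy Fwx (negbTE nexw).
have Fyw : (y == w) = false by rewrite eq_sym.
have Fwz := edge_neq irr wz. have Fzw : (z == w) = false by rewrite eq_sym.
have Fzv : (z == v) = false by apply/eqP => zv; rewrite zv yv in neyz.
have Fvz : (v == z) = false by rewrite eq_sym.
have zw : e z w by rewrite sym.
have pW j : (idx j == w) = false by apply/eqP => jw; rewrite -jw idxI in wI.
exists (switch e [:: (u,x); (x,u); (v,y); (y,v); (w,z); (z,w)]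
                 [:: (u,v); (v,u); (x,w); (w,x); (y,z); (z,y)]).
split; last split.
- apply: switch_real => //.
  + by rewrite /= !inE !xpair_eqE ?Fux ?Fxu ?Fuv ?Fvu ?Fuy ?Fyu ?Fxv ?Fvx ?Fvy ?Fyv ?Fwu ?Fuw ?Fwv ?Fvw ?Fwy ?Fyw ?Fwz ?Fzw ?Fwx ?Fxw ?andbF.
  + by rewrite /= !inE !xpair_eqE ?Fux ?Fxu ?Fuv ?Fvu ?Fuy ?Fyu ?Fxv ?Fvx ?Fvy ?Fyv ?Fwu ?Fuw ?Fwv ?Fvw ?Fwy ?Fyw ?Fwz ?Fzw ?Fwx ?Fxw ?Fyz ?Fzy ?Fzv ?Fvz ?andbF.
  + by rewrite /= ux xu vy yv wz zw.
  + by rewrite /= nab nba nexw newx neyz nezy Fuv Fvu Fxw Fwx Fyz Fzy.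
  + by rewrite /= !inE !eqxx ?orbT.
  + by rewrite /= !inE !eqxx ?orbT.
  + by move=> t /=; rewrite (addnCA (x == t)) (addnCA (y == t)).
- by rewrite /switch !inE eqxx orbT.
move=> a' b' h eab; rewrite /switch eab !inE !xpair_eqE.
by rewrite pUX // pXU // pVY // pYV // !pW ?andbF.
Qed.

Theorem lemma2p3 (k n M : nat) (eH : rel 'I_k) (d : 'I_n -> nat)
    (idx : 'I_k -> 'I_n) :
  simple_graph eH ->
  nonincreasing (deg eH) ->
  graphic d ->
  nonincreasing d ->
  (forall i, d i <= M) ->
  injective idx ->
  (forall j, deg eH j <= d (idx j)) ->
  2 * M ^ 2 + k <= #|[set i | 0 < d i]| ->
  exists eG : rel 'I_n,
    realization eG d /\ (forall a b : 'I_k, eH a b -> eG (idx a) (idx b)).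
Proof.
move=> sH _ [e0 re0] _ dM inj hd pos.
pose All := [set p : 'I_k * 'I_k | eH p.1 p.2].
pose Hs (e : rel 'I_n) := [set p : 'I_k * 'I_k | eH p.1 p.2 && e (idx p.1) (idx p.2)].
suff main : forall m e, realization e d -> #|All| - #|Hs e| <= m ->
  exists eG : rel 'I_n,
    realization eG d /\ (forall a b : 'I_k, eH a b -> eG (idx a) (idx b)).
  exact: (main #|All| e0 re0 (leq_subr _ _)).
elim=> [|m IH] e re hm;
  (case: (boolP [exists p : 'I_k * 'I_k, eH p.1 p.2 && ~~ e (idx p.1) (idx p.2)]);
    last first;
    [ move=> /existsPn none; exists e; split => // a b hab;
      by have := none (a, b); rewrite /= hab /= negbK
    | case/existsP => [[a b] /= /andP [hab nab]];
      have [e' [re' [eab pres]]] := step sH dM inj hd pos re hab nab;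
      have sub : Hs e \proper Hs e';
        [ apply/properP; split;
          [ apply/subsetP => p; rewrite !inE => /andP [h1 h2]; by rewrite h1 pres
          | exists (a, b); by rewrite !inE /= ?hab ?eab ?(negbTE nab) ]
        | have c1 := proper_card sub;
          have c2 : #|Hs e'| <= #|All|
            by apply: subset_leq_card; apply/subsetP => p; rewrite !inE => /andP [] ]]).
- move: hm c1 c2; clear; lia.
- apply: (IH e' re'); move: hm c1 c2; clear; lia.
Qed.
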